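(* A threshold function $f$ is linear read-once if and only if no restriction of $f$ equals, up to renaming of variables, a function in $\mathcal{G}$, where $\mathcal{G}$ is the set of all functions obtained from $g_n(x_1,\ldots,x_n)=x_1x_2\vee x_1x_3\vee\cdots\vee x_1x_n\vee x_2x_3\cdots x_n$, $n\ge3$, by negating some (possibly none) of the variables.
   Context: $f$ on $\{0,1\}^n$ is a threshold function if there are $w_1,\ldots,w_n,t\in\mathbb{R}$ with $f(\mathbf{x})=0\iff\sum_iw_ix_i\le t$. A restriction of $f$ is obtained by fixing some variables to constants. Linear read-once (lro): constant or representable by a nested formula (literals $x,\overline{x}$ are nested; $x\vee t$, $x\wedge t$, $\overline{x}\vee t$, $\overline{x}\wedge t$ are nested when $t$ is nested and contains neither $x$ nor $\overline{x}$). *)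

(* Defs.v *)
From Stdlib Require Import Reals.
From mathcomp Require Import all_boot.
Set Implicit Arguments. Unset Strict Implicit. Unset Printing Implicit Defensive.

Definition bfun (n : nat) := ('I_n -> bool) -> bool.

Definition wsum (n : nat) (w : 'I_n -> R) (x : 'I_n -> bool) : R :=
  \big[Rplus/R0]_(i < n) (if x i then w i else R0).

Definition threshold (n : nat) (f : bfun n) : Prop :=
  exists (w : 'I_n -> R) (t : R),
    forall x : 'I_n -> bool, f x = false <-> Rle (wsum w x) t.

(* Nested formulas. [neg = true] means the literal is the complemented variable. *)
Inductive nformula (n : nat) : Type :=
  | NLit of 'I_n & bool
  | NOr  of 'I_n & bool & nformula n
  | NAnd of 'I_n & bool & nformula n.

Fixpoint nf_vars (n : nat) (t : nformula n) : seq 'I_n :=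
  match t with
  | NLit i _ => [:: i]
  | NOr i _ t' => i :: nf_vars t'
  | NAnd i _ t' => i :: nf_vars t'
  end.

Fixpoint nested (n : nat) (t : nformula n) : bool :=
  match t with
  | NLit _ _ => true
  | NOr i _ t' => (i \notin nf_vars t') && nested t'
  | NAnd i _ t' => (i \notin nf_vars t') && nested t'
  end.

Definition lit_val (n : nat) (i : 'I_n) (neg : bool) (x : 'I_n -> bool) : bool :=
  x i (+) neg.

Fixpoint nf_eval (n : nat) (t : nformula n) (x : 'I_n -> bool) : bool :=
  match t with
  | NLit i b => lit_val i b x
  | NOr i b t' => lit_val i b x || nf_eval t' x
  | NAnd i b t' => lit_val i b x && nf_eval t' x
  end.

Definition lro (n : nat) (f : bfun n) : Prop :=
  (exists c : bool, forall x, f x = c) \/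
  (exists t : nformula n, nested t /\ forall x, f x = nf_eval t x).

(* g_m(x_1..x_m) = x1x2 \/ x1x3 \/ ... \/ x1xm \/ x2x3...xm  (0-indexed here:
   variable 0 plays the role of x_1). *)
Definition gfun (m : nat) : bfun m := fun y =>
  [exists i : 'I_m, exists j : 'I_m,
     [&& val i == 0, 0 < val j, y i & y j]]
  || [forall j : 'I_m, (0 < val j) ==> y j].

Definition gneg (m : nat) (s : 'I_m -> bool) : bfun m :=
  fun y => gfun (fun j => y j (+) s j).

(* Restriction of f followed by renaming: the free (unfixed) variables are
   exactly the image of the injective map sigma : 'I_m -> 'I_n, variable j of
   the new function being x_(sigma j); all other variables are fixed to c. *)
Definition restrict_rename (n m : nat) (f : bfun n) (sigma : 'I_m -> 'I_n)
    (c : 'I_n -> bool) : bfun m :=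
  fun y => f (fun i => match [pick j | sigma j == i] with
                       | Some j => y j
                       | None => c i
                       end).

Definition has_G_restriction (n : nat) (f : bfun n) : Prop :=
  exists (m : nat) (sigma : 'I_m -> 'I_n) (c : 'I_n -> bool) (s : 'I_m -> bool),
    3 <= m /\ injective sigma /\
    forall y : 'I_m -> bool, restrict_rename f sigma c y = gneg s y.

(* Main.v *)
From HB Require Import structures.
Require Import Defs.
From Stdlib Require Import Reals Lra FunctionalExtensionality.
From mathcomp Require Import all_boot.
Set Implicit Arguments. Unset Strict Implicit. Unset Printing Implicit Defensive.

Lemma gfun_noforce (m : nat) (Hm : 3 <= m) (j : 'I_m) (v : bool) :
  exists u1 u2 : 'I_m -> bool, u1 j = v /\ u2 j = v /\ gfun u1 = true /\ gfun u2 = false.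
Proof.
have H1 : 1 < m by apply: leq_trans Hm.
have H2 : 2 < m by [].
have H0 : 0 < m by apply: leq_trans H1.
pose o0 := Ordinal H0. pose o1 := Ordinal H1. pose o2 := Ordinal H2.
pose k := if val j == 1 then o2 else o1.
have kpos : 0 < val k by rewrite /k; case: ifP.
have kj : k != j.
  apply/eqP; rewrite /k; case: ifP => [/eqP j1|j1] E; move: (f_equal val E) => /= E'.
    by rewrite j1 in E'.
  move: j1 E' => h e; move/negbT: h => /negP; apply; apply/eqP; exact: (esym e).
case: v.
- exists (fun _ => true), (fun q => q == j); split=> //; split; first by rewrite eqxx.
  split; first by apply/orP; right; apply/forallP=> q; apply/implyP.
  rewrite /gfun /=; apply/norP; split.
  + apply/negP=> /existsP [i /existsP [j' HH]]; case/and4P: HH => /eqP i0 j'p /eqP ij /eqP j'j.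
    by move: j'p; rewrite j'j -ij i0.
  + apply/negP=> /forallP /(_ k) /implyP /(_ kpos) /eqP E.
    by rewrite E eqxx in kj.
- case: (posnP (val j)) => [j0|jpos].
  + exists (fun q => 0 < val q), (fun _ => false); split; first by rewrite j0.
    split=> //; split.
    * by rewrite /gfun /=; apply/orP; right; apply/forallP=> q; apply/implyP.
    * rewrite /gfun /=; apply/norP; split.
      - by apply/existsPn => i; apply/existsPn => j'; rewrite !andbF.
      - by apply/negP=> /forallP /(_ k) /implyP /(_ kpos).
  + exists (fun q => (q == o0) || (q == k)), (fun _ => false).
    split.
      apply/norP; split; apply/negP=> /eqP E.
        by move: (f_equal val E) jpos => /= ->.
      by rewrite E eqxx in kj.
    split=> //; split.
    * rewrite /gfun /=; apply/orP; left; apply/existsP; exists o0; apply/existsP; exists k.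
      by rewrite /= kpos eqxx orbT.
    * rewrite /gfun /=; apply/norP; split.
      - by apply/existsPn => i; apply/existsPn => j'; rewrite !andbF.
      - by apply/negP=> /forallP /(_ k) /implyP /(_ kpos).
Qed.

Lemma gneg_noforce (m : nat) (Hm : 3 <= m) (s : 'I_m -> bool) (j : 'I_m) (v : bool) :
  exists y1 y2 : 'I_m -> bool, y1 j = v /\ y2 j = v /\ gneg s y1 = true /\ gneg s y2 = false.
Proof.
have [u1 [u2 [e1 [e2 [g1 g2]]]]] := gfun_noforce Hm j (v (+) s j).
exists (fun q => u1 q (+) s q), (fun q => u2 q (+) s q).
rewrite e1 e2 -!addbA addbb !addbF; split=> //; split=> //.
rewrite /gneg.
have -> : (fun j0 => u1 j0 (+) s j0 (+) s j0) = u1.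
  by apply: functional_extensionality => q; rewrite -addbA addbb addbF.
have -> // : (fun j0 => u2 j0 (+) s j0 (+) s j0) = u2.
  by apply: functional_extensionality => q; rewrite -addbA addbb addbF.
Qed.

Definition zf (n m : nat) (sigma : 'I_m -> 'I_n) (c : 'I_n -> bool) (y : 'I_m -> bool) :=
  fun i => match [pick j | sigma j == i] with
           | Some j => y j
           | None => c i
           end.

Lemma zf_sigma n m (sigma : 'I_m -> 'I_n) c y j :
  injective sigma -> zf sigma c y (sigma j) = y j.
Proof.
move=> inj; rewrite /zf; case: pickP => [j' /eqP /inj -> //|].
by move=> /(_ j); rewrite eqxx.
Qed.

Lemma zf_out n m (sigma : 'I_m -> 'I_n) c y i :
  (forall j, sigma j != i) -> zf sigma c y i = c i.
Proof.
move=> H; rewrite /zf; case: pickP => [j' E|//].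
by move: (H j'); rewrite E.
Qed.

Lemma no_nf n m (Hm : 3 <= m) (sigma : 'I_m -> 'I_n) c s (inj : injective sigma) :
  forall t : nformula n, ~ (forall y, gneg s y = nf_eval t (zf sigma c y)).
Proof.
have nc : forall b, ~ (forall y, gneg s y = b).
  move=> b H; have [y1 [y2 [_ [_ [g1 g2]]]]] := gneg_noforce Hm s (Ordinal (leq_trans (isT : 0 < 3) Hm)) true.
  by move: (H y1) (H y2); rewrite g1 g2 => <-.
have lit : forall i b, (exists j, sigma j = i) \/ (forall y, lit_val i b (zf sigma c y) = c i (+) b).
  move=> i b; case: (pickP (fun j => sigma j == i)) => [j /eqP E|none].
    by left; exists j.
  by right=> y; rewrite /lit_val zf_out // => j; rewrite none.
elim=> [i b|i b t IH|i b t IH] H.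
- case: (lit i b) => [[j E]|L].
  + have [y1 [y2 [e1 [e2 [g1 g2]]]]] := gneg_noforce Hm s j true.
    move: (H y1) (H y2); rewrite g1 g2 /= /lit_val -E !zf_sigma // e1 e2.
    by move=> <-.
  + by apply: (nc (c i (+) b)) => y; rewrite H /= L.
- case: (lit i b) => [[j E]|L].
  + have [y1 [y2 [e1 [e2 [g1 g2]]]]] := gneg_noforce Hm s j (~~ b).
    move: (H y2); rewrite g2 /= /lit_val -E !zf_sigma // e2.
    by rewrite addNb addbb.
  + case Cb: (c i (+) b).
      by apply: (nc true) => y; rewrite H /= L Cb.
    by apply: IH => y; rewrite H /= L Cb.
- case: (lit i b) => [[j E]|L].
  + have [y1 [y2 [e1 [e2 [g1 g2]]]]] := gneg_noforce Hm s j b.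
    move: (H y1); rewrite g1 /= /lit_val -E !zf_sigma // e1.
    by rewrite addbb.
  + case Cb: (c i (+) b).
      by apply: IH => y; rewrite H /= L Cb.
    by apply: (nc false) => y; rewrite H /= L Cb.
Qed.

Lemma easy_dir n (f : bfun n) : lro f -> ~ has_G_restriction f.
Proof.
move=> Hl [m [sigma [c [s [Hm [inj H]]]]]].
case: Hl => [[b Hb]|[t [_ Ht]]].
- have [y1 [y2 [_ [_ [g1 g2]]]]] := gneg_noforce Hm s (Ordinal (leq_trans (isT : 0 < 3) Hm)) true.
  move: (H y1) (H y2); rewrite g1 g2 /restrict_rename !Hb.
  by move=> E1 E2; rewrite E1 in E2.
- apply: (@no_nf _ _ Hm sigma c s inj t) => y.
  by rewrite -H /restrict_rename Ht.
Qed.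

Local Open Scope R_scope.

Lemma Rplus_assoc' : associative Rplus.
Proof. by move=> x y z; rewrite Rplus_assoc. Qed.
HB.instance Definition _ := Monoid.isComLaw.Build R R0 Rplus Rplus_assoc' Rplus_comm Rplus_0_l.

Definition cv n (w : 'I_n -> R) (j : 'I_n) (v : bool) : R := if v then w j else R0.

Lemma wsum_le n (w : 'I_n -> R) x y :
  (forall k, cv w k (x k) <= cv w k (y k)) -> wsum w x <= wsum w y.
Proof.
move=> H; rewrite /wsum; apply: (big_ind2 (fun a b => a <= b)).
- lra.
- move=> *; lra.
- by move=> k _; apply: H.
Qed.

Lemma wsum_D1 n (w : 'I_n -> R) x j :
  wsum w x = cv w j (x j) + \big[Rplus/R0]_(k < n | k != j) cv w k (x k).
Proof. by rewrite /wsum (bigD1 j). Qed.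

Lemma wsum_lt n (w : 'I_n -> R) x y j :
  (forall k, cv w k (x k) <= cv w k (y k)) -> cv w j (x j) < cv w j (y j) ->
  wsum w x < wsum w y.
Proof.
move=> H Hj; rewrite (wsum_D1 w x j) (wsum_D1 w y j).
have : \big[Rplus/R0]_(k < n | k != j) cv w k (x k) <= \big[Rplus/R0]_(k < n | k != j) cv w k (y k).
  apply: (big_ind2 (fun a b => a <= b)); [lra| move=> *; lra | by move=> k _; apply: H].
lra.
Qed.

Lemma wsum_1 n (w : 'I_n -> R) x y j :
  (forall k, k != j -> x k = y k) -> wsum w x - wsum w y = cv w j (x j) - cv w j (y j).
Proof.
move=> H; rewrite (wsum_D1 w x j) (wsum_D1 w y j).
have -> : \big[Rplus/R0]_(k < n | k != j) cv w k (x k) = \big[Rplus/R0]_(k < n | k != j) cv w k (y k).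
  by apply: eq_bigr => k kj; rewrite H.
lra.
Qed.

Definition good n (w : 'I_n -> R) j : bool := if Rlt_dec 0 (w j) then true else false.

Lemma cv_good_ge n (w : 'I_n -> R) j v : cv w j v <= cv w j (good w j).
Proof. rewrite /cv /good; case: Rlt_dec; case: v => /=; lra. Qed.

Lemma cv_bad_le n (w : 'I_n -> R) j v : cv w j (~~ good w j) <= cv w j v.
Proof. rewrite /cv /good; case: Rlt_dec; case: v => /=; lra. Qed.

Lemma cv_strict n (w : 'I_n -> R) j : w j <> 0 -> cv w j (~~ good w j) < cv w j (good w j).
Proof. rewrite /cv /good; case: Rlt_dec => /=; lra. Qed.

Lemma cv_diff n (w : 'I_n -> R) j : cv w j (good w j) - cv w j (~~ good w j) = Rabs (w j).
Proof.
rewrite /cv /good; case: Rlt_dec => /= h.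
- rewrite Rabs_right; lra.
- rewrite Rabs_left1; lra.
Qed.

Lemma ex_max (T : eqType) (s : seq T) (P : pred T) (F : T -> R) :
  (exists x, x \in s /\ P x) -> exists x, x \in s /\ P x /\ forall y, y \in s -> P y -> F y <= F x.
Proof.
elim: s => [[x [] //]|a s IH] [x [xs Px]].
case: (boolP (has P s)) => [/hasP [z zs Pz]|hn].
- have [m [ms [Pm Hm]]] := IH (ex_intro _ z (conj zs Pz)).
  case: (boolP (P a)) => Pa.
  + case: (Rle_dec (F a) (F m)) => h.
    * exists m; split; first by rewrite inE ms orbT.
      split=> // y; rewrite inE => /orP [/eqP -> //|]; exact: Hm.
    * exists a; split; first by rewrite inE eqxx.
      split=> // y; rewrite inE => /orP [/eqP -> |ys Py]; first lra.
      have := Hm y ys Py; lra.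
  + exists m; split; first by rewrite inE ms orbT.
    split=> // y; rewrite inE => /orP [/eqP -> |]; first by rewrite (negbTE Pa).
    exact: Hm.
- exists a; move: xs; rewrite inE => /orP [/eqP xa|xs]; last first.
    by move/hasPn: hn => /(_ x xs); rewrite Px.
  rewrite -xa; split; first by rewrite inE eqxx.
  split=> // y; rewrite inE => /orP [/eqP -> |ys Py]; first lra.
  by move/hasPn: hn => /(_ y ys); rewrite Py.
Qed.

Lemma ex_maxT (T : finType) (P : pred T) (F : T -> R) :
  (exists x, P x) -> exists x, P x /\ forall y, P y -> F y <= F x.
Proof.
move=> [x Px]; have [m [_ [Pm Hm]]] := @ex_max T (enum T) P F (ex_intro _ x (conj (mem_enum T x) Px)).
by exists m; split=> // y Py; apply: Hm => //; rewrite mem_enum.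
Qed.

Lemma ex_minT (T : finType) (P : pred T) (F : T -> R) :
  (exists x, P x) -> exists x, P x /\ forall y, P y -> F x <= F y.
Proof.
move=> H; have [m [Pm Hm]] := @ex_maxT T P (fun x => - F x) H.
by exists m; split=> // y Py; have := Hm y Py; lra.
Qed.

Definition pt n (U : {set 'I_n}) (x c : 'I_n -> bool) : 'I_n -> bool :=
  fun j => if j \in U then x j else c j.

Lemma wsum_ext n (w : 'I_n -> R) x y : x =1 y -> wsum w x = wsum w y.
Proof. by move=> H; rewrite /wsum; apply: eq_bigr => k _; rewrite H. Qed.

Lemma f_false n (f : bfun n) w t (fT : forall x, f x = true <-> t < wsum w x) x :
  f x = false <-> wsum w x <= t.
Proof.
split.
- move=> E; case: (Rle_dec (wsum w x) t) => // h.
  by have := proj2 (fT x) (Rnot_le_lt _ _ h); rewrite E.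
- move=> h; case E: (f x) => //; have := proj1 (fT x) E; lra.
Qed.

Lemma f_ext n (f : bfun n) w t (fT : forall x, f x = true <-> t < wsum w x) x y :
  x =1 y -> f x = f y.
Proof.
move=> H; case E: (f y).
- by apply/fT; rewrite (wsum_ext w H); apply/fT.
- by apply/(f_false fT); rewrite (wsum_ext w H); apply/(f_false fT).
Qed.

Lemma gfun_lift k (u : 'I_k.+1 -> bool) :
  gfun u = (u ord0 && [exists q, u (lift ord0 q)]) || [forall q, u (lift ord0 q)].
Proof.
rewrite /gfun; congr orb.
- apply/existsP/andP => [[i /existsP [j /and4P [/eqP i0 j0 ui uj]]]|[u0 /existsP [q uq]]].
  + have i0' : i = ord0 by apply: val_inj.
    rewrite i0' in ui.
    split=> //; apply/existsP.
    case: (unliftP ord0 j) uj j0 => [q ->|->] //; by exists q.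
  + exists ord0; apply/existsP; exists (lift ord0 q); by rewrite /= u0 uq.
- apply/forallP/forallP => H q.
  + by have := H (lift ord0 q); rewrite /=.
  + apply/implyP => q0; case: (unliftP ord0 q) q0 => [q' ->|->] //= _; exact: H.
Qed.

Lemma ex_enum (T : finType) (A : {set T}) (P : pred T) :
  [exists q : 'I_#|A|, P (enum_val q)] = [exists k in A, P k].
Proof.
apply/existsP/existsP => [[q Hq]|[k /andP [kA Pk]]].
- by exists (enum_val q); rewrite enum_valP.
- by exists (enum_rank_in kA k); rewrite enum_rankK_in.
Qed.

Lemma all_enum (T : finType) (A : {set T}) (P : pred T) :
  [forall q : 'I_#|A|, P (enum_val q)] = [forall k in A, P k].
Proof.
apply/forallP/forallP => [H k|H q].
- apply/implyP => kA; have := H (enum_rank_in kA k); by rewrite enum_rankK_in.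
- by have := H (enum_val q); rewrite enum_valP.
Qed.

Lemma core n (f : bfun n) (w : 'I_n -> R) (t : R) (fT : forall x, f x = true <-> t < wsum w x)
  (U : {set 'I_n}) (c : 'I_n -> bool) (i : 'I_n) (iU : i \in U)
  (nz : forall j, j \in U -> w j <> 0) (imax : forall j, j \in U -> Rabs (w j) <= Rabs (w i))
  (Hbot : f (pt U (fun j => if j == i then good w i else ~~ good w j) c) = false)
  (Htop : f (pt U (fun j => if j == i then ~~ good w i else good w j) c) = true) :
  has_G_restriction f.
Proof.
set b := good w i.
have fF := f_false fT.
have fE := f_ext fT.
pose PF := fun X : {ffun 'I_n -> bool} => (X i == b) && ~~ f (pt U X c).
have w1 : PF [ffun j => if j == i then b else ~~ good w j].
  rewrite /PF ffunE eqxx /=; apply/andP; split=> //; apply/negbT; rewrite -Hbot; apply: fE => k.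
  by rewrite /pt ffunE.
have [XF [PXF maxF]] := @ex_maxT _ PF (fun X => wsum w (pt U X c)) (ex_intro PF _ w1).
move: PXF; rewrite /PF => /andP [/eqP XFi /negbTE fpF].
pose D := [set j in U | (j != i) && (XF j != good w j)].
have Dprop : forall j, j \in D -> [/\ j \in U, j != i & XF j = ~~ good w j].
  move=> j; rewrite inE => /and3P [jU ji /negbTE H]; split=> //.
  by move: H; case: (XF j); case: (good w j).
have nD : forall j, j \in U -> j != i -> j \notin D -> XF j = good w j.
  move=> j jU ji; rewrite inE jU ji /= negbK => /eqP //.
pose PT := fun X : {ffun 'I_n -> bool} =>
  [&& X i == ~~ b, [forall j, ((j \in U) && (j != i) && (j \notin D)) ==> (X j == XF j)] & f (pt U X c)].
have w2 : PT [ffun j => if j == i then ~~ b else good w j].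
  rewrite /PT; apply/and3P; split; first by rewrite ffunE eqxx.
  - apply/forallP => j; apply/implyP => /andP [/andP [jU ji] jD].
    by rewrite ffunE (negbTE ji) (nD j jU ji jD).
  - rewrite (@fE _ (pt U (fun j => if j == i then ~~ good w i else good w j) c)) // => k; by rewrite /pt ffunE.
have [XT [PXT minT]] := @ex_minT _ PT (fun X => wsum w (pt U X c)) (ex_intro PT _ w2).
move: PXT; rewrite /PT => /and3P [/eqP XTi /forallP XTa fpT].
have XTnD : forall j, j \in U -> j != i -> j \notin D -> XT j = XF j.
  by move=> j jU ji jD; move: (XTa j); rewrite jU ji jD /= => /eqP.
pose B := [set j in D | XT j == good w j].
have Bprop : forall j, j \in B -> j \in D /\ XT j = good w j.
  by move=> j; rewrite inE => /andP [? /eqP].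
have nB : forall j, j \in D -> j \notin B -> XT j = ~~ good w j.
  move=> j jD; rewrite inE jD /=; by case: (XT j); case: (good w j).
have tT : t < wsum w (pt U XT c) by apply/fT.
have tF : wsum w (pt U XF c) <= t by apply/fF.
have flipT : forall j, j \in B -> wsum w (pt U [ffun k => if k == j then ~~ good w j else XT k] c) <= t.
  move=> j jB; have [jD XTj] := Bprop j jB; have [jU ji _] := Dprop j jD.
  have ij : (i == j) = false by rewrite eq_sym; exact: negbTE ji.
  apply/fF; case E: (f _) => //.
  have PX' : PT [ffun k => if k == j then ~~ good w j else XT k].
    rewrite /PT; apply/and3P; split; first by rewrite ffunE ij XTi.
    - apply/forallP => k; apply/implyP => /andP [/andP [kU ki] kD].
      rewrite ffunE; case: (k =P j) => [kj|_]; first by rewrite kj jD in kD.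
      by move: (XTa k); rewrite kU ki kD.
    - by rewrite E.
  have := minT _ PX'.
  have : wsum w (pt U [ffun k => if k == j then ~~ good w j else XT k] c) < wsum w (pt U XT c).
    apply: (wsum_lt (j:=j)).
    - move=> k; rewrite /pt ffunE; case: (k =P j) => [->|_]; last exact: Rle_refl.
      rewrite jU; exact: cv_bad_le.
    - rewrite /pt ffunE eqxx jU XTj; exact: cv_strict (nz j jU).
  move=> h1 h2; exfalso; exact: (Rlt_not_le _ _ h1 h2).
have flipF : forall j, j \in D -> t < wsum w (pt U [ffun k => if k == j then good w j else XF k] c).
  move=> j jD; have [jU ji XFj] := Dprop j jD.
  have ij : (i == j) = false by rewrite eq_sym; exact: negbTE ji.
  apply/fT; case E: (f _) => //.
  have PX' : PF [ffun k => if k == j then good w j else XF k].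
    by rewrite /PF ffunE ij XFi eqxx E.
  have := maxF _ PX'.
  have : wsum w (pt U XF c) < wsum w (pt U [ffun k => if k == j then good w j else XF k] c).
    apply: (wsum_lt (j:=j)).
    - move=> k; rewrite /pt ffunE; case: (k =P j) => [->|_]; last exact: Rle_refl.
      rewrite jU; exact: cv_good_ge.
    - rewrite /pt ffunE eqxx jU XFj; exact: cv_strict (nz j jU).
  move=> h1 h2; exfalso; exact: (Rlt_not_le _ _ h1 h2).
have Bge2 : (1 < #|B|)%N.
  rewrite ltnNge; apply/negP => Hle.
  case E: #|B| Hle => [|[|k]] // _.
  - move/eqP: E; rewrite cards_eq0 => /eqP B0.
    have : wsum w (pt U XT c) <= wsum w (pt U XF c); last lra.
    apply: wsum_le => k; rewrite /pt; case kU: (k \in U); last exact: Rle_refl.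
    case: (k =P i) => [->|/eqP ki]; first by rewrite XTi XFi; exact: cv_bad_le.
    case: (boolP (k \in D)) => kD.
    + have [_ _ ->] := Dprop k kD; rewrite nB //; first exact: Rle_refl.
      by rewrite B0 inE.
    + rewrite XTnD //; exact: Rle_refl.
  - move/eqP: E => /cards1P [j Bj].
    have jB : j \in B by rewrite Bj set11.
    have [jD XTj] := Bprop j jB; have [jU ji XFj] := Dprop j jD.
    have ij : (i == j) = false by rewrite eq_sym; exact: negbTE ji.
    have e1 := @wsum_1 _ w (pt U [ffun k => if k == j then good w j else XF k] c) (pt U XF c) j.
    rewrite /pt !ffunE eqxx jU XFj in e1.
    have e2 := @wsum_1 _ w (pt U [ffun k => if k == j then good w j else XF k] c) (pt U XT c) i.
    rewrite /pt !ffunE ij iU XFi XTi in e2.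
    have h1 := cv_diff w j; have h2 := cv_diff w i; have h3 := imax j jU.
    have HH := flipF j jD.
    have E1 : wsum w (pt U [ffun k => if k == j then good w j else XF k] c) - wsum w (pt U XF c) =
       Rabs (w j).
      rewrite -h1 /pt e1 // => k kj; by rewrite ffunE (negbTE kj).
    have E2 : wsum w (pt U [ffun k => if k == j then good w j else XF k] c) - wsum w (pt U XT c) =
       Rabs (w i).
      rewrite -h2 /pt e2 // => k ki; rewrite ffunE.
      case kU: (k \in U) => //.
      case: (k =P j) => [->|/eqP kj]; first by rewrite XTj.
      case: (boolP (k \in D)) => kD.
      + have [_ _ ->] := Dprop k kD; rewrite nB //.
        by rewrite Bj inE.
      + by rewrite XTnD.
    lra.
have Bsub : forall k, k \in B -> [/\ k \in U, k != i, XF k = ~~ good w k & XT k = good w k].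
  move=> k kB; have [kD XTk] := Bprop k kB; have [kU ki XFk] := Dprop k kD; by split.
have pout0 : forall k, k \notin B -> k != i -> pt U XT c k = pt U XF c k.
  move=> k kB ki; rewrite /pt; case kU: (k \in U) => //.
  case: (boolP (k \in D)) => kD; last by rewrite XTnD.
  by have [_ _ ->] := Dprop k kD; rewrite nB.
have coreq : forall p : 'I_n -> bool, (forall k, k != i -> k \notin B -> p k = pt U XT c k) ->
  f p = ((p i == b) && [exists k in B, p k == good w k]) || [forall k in B, p k == good w k].
  move=> p Hp.
  case: (boolP [forall k in B, p k == good w k]) => [/forall_inP All|/forall_inPn [k0 k0B /negbTE pk0]].
  - rewrite orbT; apply/fT; apply: (Rlt_le_trans _ _ _ tT); apply: wsum_le => k.
    case: (k =P i) => [->|/eqP ki]; first by rewrite /pt iU XTi; exact: cv_bad_le.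
    case: (boolP (k \in B)) => kB.
    + have [kU _ _ XTk] := Bsub k kB; rewrite /pt kU XTk (eqP (All k kB)); exact: Rle_refl.
    + rewrite Hp //; exact: Rle_refl.
  - rewrite orbF.
    have [k0U k0i XFk0 XTk0] := Bsub k0 k0B.
    have pk0' : p k0 = ~~ good w k0 by move: pk0; case: (p k0); case: (good w k0).
    case: (boolP (p i == b)) => /= pib.
    + case: (boolP [exists k in B, p k == good w k]) => [/exists_inP [k1 k1B /eqP pk1]|/exists_inPn Hn].
      * have [k1U k1i XFk1 XTk1] := Bsub k1 k1B.
        have [k1D _] := Bprop k1 k1B.
        apply/fT; apply: (Rlt_le_trans _ _ _ (flipF k1 k1D)); apply: wsum_le => k.
        rewrite /pt ffunE.
        case: (k =P k1) => [->|/eqP kk1]; first by rewrite k1U pk1; exact: Rle_refl.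
        case: (k =P i) => [->|/eqP ki]; first by rewrite iU XFi (eqP pib); exact: Rle_refl.
        case: (boolP (k \in B)) => kB.
        - have [kU _ XFk _] := Bsub k kB; rewrite kU XFk; exact: cv_bad_le.
        - rewrite (Hp k ki kB) (pout0 k kB ki) /pt; exact: Rle_refl.
      * apply/fF; apply: (Rle_trans _ _ _ _ tF); apply: wsum_le => k.
        case: (k =P i) => [->|/eqP ki]; first by rewrite /pt iU XFi (eqP pib); exact: Rle_refl.
        case: (boolP (k \in B)) => kB.
        - have [kU _ XFk _] := Bsub k kB.
          have pb : p k = ~~ good w k by move: (Hn k kB); case: (p k); case: (good w k).
          rewrite /pt kU XFk pb; exact: Rle_refl.
        - rewrite (Hp k ki kB) (pout0 k kB ki); exact: Rle_refl.
    + have pi' : p i = ~~ b by move: pib; rewrite /b; case: (p i); case: (good w i).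
      apply/fF; apply: (Rle_trans _ _ _ _ (flipT k0 k0B)); apply: wsum_le => k.
      rewrite /pt ffunE.
      case: (k =P k0) => [->|/eqP kk0]; first by rewrite k0U pk0'; exact: Rle_refl.
      case: (k =P i) => [->|/eqP ki]; first by rewrite iU XTi pi'; exact: Rle_refl.
      case: (boolP (k \in B)) => kB.
      - have [kU _ _ XTk] := Bsub k kB; rewrite kU XTk; exact: cv_good_ge.
      - rewrite (Hp k ki kB) /pt; exact: Rle_refl.
pose sigma := fun q : 'I_#|B|.+1 => if unlift ord0 q is Some k then enum_val k else i.
pose s := fun q : 'I_#|B|.+1 => if unlift ord0 q is Some k then ~~ good w (enum_val k) else ~~ b.
pose cG := pt U XT c.
have s0 : sigma ord0 = i by rewrite /sigma unlift_none.
have sl : forall q, sigma (lift ord0 q) = enum_val q by move=> q; rewrite /sigma liftK.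
have ss0 : s ord0 = ~~ b by rewrite /s unlift_none.
have ssl : forall q, s (lift ord0 q) = ~~ good w (enum_val q) by move=> q; rewrite /s liftK.
have iB : i \notin B by apply/negP => /Bsub [_ /eqP].
have inj : injective sigma.
  move=> q1 q2.
  case: (unliftP ord0 q1) => [k1 ->|->]; case: (unliftP ord0 q2) => [k2 ->|->] //;
    rewrite ?sl ?s0.
  - by move/enum_val_inj => ->.
  - by move=> E; have := enum_valP k1; rewrite E (negbTE iB).
  - by move=> E; have := enum_valP k2; rewrite -E (negbTE iB).
exists #|B|.+1, sigma, cG, s; split; first by [].
split=> // y.
change (f (zf sigma cG y) = gneg s y).
have pi : zf sigma cG y i = y ord0 by rewrite -{1}s0 zf_sigma.
have pe : forall q, zf sigma cG y (enum_val q) = y (lift ord0 q).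
  by move=> q; rewrite -sl zf_sigma.
rewrite coreq; last first.
  move=> k ki kB; rewrite zf_out // => q.
  case: (unliftP ord0 q) => [q' ->|->]; rewrite ?sl ?s0.
  - by apply/eqP => E; have := enum_valP q'; rewrite E (negbTE kB).
  - by rewrite eq_sym.
rewrite /gneg gfun_lift -ex_enum -all_enum ss0 pi.
have xe : forall x g : bool, x (+) ~~ g = (x == g) by move=> [] [].
rewrite xe; congr (_ && _ || _).
- by apply: eq_existsb => q; rewrite pe ssl xe.
- by apply: eq_forallb => q; rewrite pe ssl xe.
Qed.

Lemma hard_ind n (f : bfun n) (w : 'I_n -> R) (t : R) (fT : forall x, f x = true <-> t < wsum w x)
  (noG : ~ has_G_restriction f) : forall k (U : {set 'I_n}) c, (#|U| < k)%N ->
  (exists bb, forall x, f (pt U x c) = bb) \/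
  (exists tt, nested tt /\ (forall j, j \in nf_vars tt -> j \in U) /\ forall x, f (pt U x c) = nf_eval tt x).
Proof.
have fF := f_false fT.
have fE := f_ext fT.
have fW : forall x y, wsum w x = wsum w y -> f x = f y.
  move=> x y H; case E: (f y).
  - by apply/fT; rewrite H; apply/fT.
  - by apply/fF; rewrite H; apply/fF.
elim => [//|k IH] U c HU.
pose isz := fun j => if Req_EM_T (w j) R0 then true else false.
case: (boolP [exists j in U, isz j]) => [/exists_inP [j jU] | /exists_inPn nz0].
  rewrite /isz; case: Req_EM_T => // wj0 _.
- have HU' : (#|U :\ j| < k)%N by move: HU; rewrite (cardsD1 j U) jU.
  have eqf : forall x, f (pt U x c) = f (pt (U :\ j) x c).
    move=> x; apply: fW.
    have := @wsum_1 _ w (pt U x c) (pt (U :\ j) x c) j.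
    rewrite /cv wj0 => H.
    suff: wsum w (pt U x c) - wsum w (pt (U :\ j) x c) = 0 by lra.
    rewrite H; first by case: ifP; case: ifP; lra.
    by move=> q qj; rewrite /pt in_setD1 qj.
  case: (IH (U :\ j) c HU') => [[bb Hbb]|[tt [ntt [vtt Htt]]]].
  + by left; exists bb => x; rewrite eqf.
  + right; exists tt; split=> //; split.
    * by move=> q /vtt; rewrite in_setD1 => /andP [].
    * by move=> x; rewrite eqf.
- have nz : forall j, j \in U -> w j <> 0.
    by move=> j jU; move: (nz0 j jU); rewrite /isz; case: Req_EM_T.
  case: (set_0Vmem U) => [U0 | [i0 i0U]].
    by left; exists (f c) => x; apply: fE => q; rewrite /pt U0 inE.
  have [i [iU imax]] := @ex_maxT _ (fun j => j \in U) (fun j => Rabs (w j)) (ex_intro _ i0 i0U).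
  set b := good w i.
  have HU' : (#|U :\ i| < k)%N by move: HU; rewrite (cardsD1 i U) iU.
  have xcase : forall x : 'I_n -> bool, x i = b \/ x i = ~~ b by move=> x; case: (x i); case: (b); auto.
  have litb : forall x : 'I_n -> bool, x i = b -> lit_val i (~~ b) x = true.
    by move=> x xi; rewrite /lit_val xi addbN addbb.
  have litnb : forall x : 'I_n -> bool, x i = ~~ b -> lit_val i (~~ b) x = false.
    by move=> x xi; rewrite /lit_val xi addbb.
  have iU' : i \notin U :\ i by rewrite in_setD1 eqxx.
  have nvars : forall tt : nformula n, (forall j, j \in nf_vars tt -> j \in U :\ i) -> i \notin nf_vars tt.
    by move=> tt H; apply/negP => /H; rewrite (negbTE iU').
  have vsub : forall j, j \in U :\ i -> j \in U by move=> j; rewrite in_setD1 => /andP [].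
  case Hbot: (f (pt U (fun j => if j == i then good w i else ~~ good w j) c)).
  +
    have C1 : forall x, x i = b -> f (pt U x c) = true.
      move=> x xi; apply/fT; apply: (Rlt_le_trans _ _ _ (proj1 (fT _) Hbot)); apply: wsum_le => q.
      rewrite /pt; case: (q \in U); last exact: Rle_refl.
      case: (q =P i) => [->|_]; first by rewrite xi; exact: Rle_refl.
      exact: cv_bad_le.
    pose c' := fun j => if j == i then ~~ b else c j.
    have eq2 : forall x, x i = ~~ b -> f (pt U x c) = f (pt (U :\ i) x c').
      move=> x xi; apply: fE => q; rewrite /pt in_setD1 /c'.
      by case: (q =P i) => [->|_] /=; rewrite ?iU ?xi.
    case: (IH (U :\ i) c' HU') => [[bb Hbb]|[tt [ntt [vtt Htt]]]].
    * case: bb Hbb => Hbb.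
      - left; exists true => x; case: (xcase x) => xi; first exact: C1.
        by rewrite eq2 // Hbb.
      - right; exists (NLit i (~~ b)); split=> //; split.
          by move=> q; rewrite inE => /eqP ->.
        move=> x /=; case: (xcase x) => xi; first by rewrite C1 // litb.
        by rewrite eq2 // Hbb litnb.
    * right; exists (NOr i (~~ b) tt); split; first by rewrite /= nvars.
      split.
        by move=> q; rewrite inE => /orP [/eqP ->|/vtt /vsub].
      move=> x /=; case: (xcase x) => xi; first by rewrite C1 // litb.
      by rewrite eq2 // Htt litnb.
  + case Htop: (f (pt U (fun j => if j == i then ~~ good w i else good w j) c)).
      by exfalso; apply: noG; exact: (core fT iU nz imax Hbot Htop).
    have C2 : forall x, x i = ~~ b -> f (pt U x c) = false.
      move=> x xi; apply/fF; apply: (Rle_trans _ _ _ _ (proj1 (fF _) Htop)); apply: wsum_le => q.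
      rewrite /pt; case: (q \in U); last exact: Rle_refl.
      case: (q =P i) => [->|_]; first by rewrite xi; exact: Rle_refl.
      exact: cv_good_ge.
    pose c' := fun j => if j == i then b else c j.
    have eq2 : forall x, x i = b -> f (pt U x c) = f (pt (U :\ i) x c').
      move=> x xi; apply: fE => q; rewrite /pt in_setD1 /c'.
      by case: (q =P i) => [->|_] /=; rewrite ?iU ?xi.
    case: (IH (U :\ i) c' HU') => [[bb Hbb]|[tt [ntt [vtt Htt]]]].
    * case: bb Hbb => Hbb.
      - right; exists (NLit i (~~ b)); split=> //; split.
          by move=> q; rewrite inE => /eqP ->.
        move=> x /=; case: (xcase x) => xi; last by rewrite C2 // litnb.
        by rewrite eq2 // Hbb litb.
      - left; exists false => x; case: (xcase x) => xi; last exact: C2.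
        by rewrite eq2 // Hbb.
    * right; exists (NAnd i (~~ b) tt); split; first by rewrite /= nvars.
      split.
        by move=> q; rewrite inE => /orP [/eqP ->|/vtt /vsub].
      move=> x /=; case: (xcase x) => xi; last by rewrite C2 // litnb.
      by rewrite eq2 // Htt litb.
Qed.

Theorem mainTheorem17 (n : nat) (f : bfun n) :
  threshold f -> (lro f <-> ~ has_G_restriction f).
Proof.
move=> [w [t Hw]].
have fT : forall x, f x = true <-> t < wsum w x.
  move=> x; split.
  - move=> E; case: (Rle_dec (wsum w x) t) => h; last lra.
    by have := proj2 (Hw x) h; rewrite E.
  - move=> h; case E: (f x) => //; have := proj1 (Hw x) E; lra.
split; first exact: easy_dir.
move=> noG.
have := @hard_ind n f w t fT noG (#|[set: 'I_n]|.+1) [set: 'I_n] (fun _ => false) (ltnSn _).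
have pE : forall x, f (pt [set: 'I_n] x (fun _ => false)) = f x.
  by move=> x; apply: (f_ext fT) => q; rewrite /pt inE.
move=> [[bb Hbb]|[tt [ntt [_ Htt]]]].
- by left; exists bb => x; rewrite -pE.
- by right; exists tt; split=> // x; rewrite -pE.
Qed.
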